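(* Let $p\ge2$ and let $x=x_{i_1}^{r_1}x_{i_2}^{r_2}\cdots x_{i_n}^{r_n}$ ($n\ge1$, $i_1<\dots<i_n$, $r_k\ge1$) be a positive word in normal form in $F(p)$. Then $$N_2(x)=\max\{\,i_k+(p-1)(r_k+r_{k+1}+\dots+r_n)+1 : k=1,\dots,n\,\}$$ equals the $y$-coordinate of the last breakpoint of the graph of $x$ regarded as a homeomorphism of $\mathbb{R}$, and, with $D(x)=r_1+\dots+r_n+i_n$, $$\frac{D(x)}{2}\le N_2(x)\le D(x)(p-1)+1.$$
   Context: For $p\ge2$, $F(p)$ is the group of piecewise-linear orientation-preserving homeomorphisms of $[0,1]$ with breakpoints in $\mathbb{Z}[1/p]$ and slopes integer powers of $p$, with presentation $\langle x_0,x_1,\dots\mid x_i^{-1}x_jx_i=x_{j+p-1}\ (i<j)\rangle$; products are compositions on the right ($xy$ means first $x$, then $y$). Every element has a unique normal form $x_{i_1}^{r_1}\cdots x_{i_n}^{r_n}x_{j_m}^{-s_m}\cdots x_{j_1}^{-s_1}$ ($i_1<\dots<i_n$, $j_1<\dots<j_m$, positive exponents, and if both $x_i$ and $x_i^{-1}$ occur then one of $x_{i+1}^{\pm1},\dots,x_{i+p-1}^{\pm1}$ occurs). Realization on $\mathbb{R}$: the assignment $x_i\mapsto f_i$, where $f_i(t)=t$ for $t\le i$, $f_i(t)=pt+i(1-p)$ for $i\le t\le i+1$, $f_i(t)=t+p-1$ for $t\ge i+1$, extends to an isomorphism of $F(p)$ onto a group of piecewise-linear homeomorphisms of $\mathbb{R}$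 (with composition on the right); the graph of $x$ refers to the graph of this homeomorphism of $\mathbb{R}$. *)

(* Defs.v *)
From Stdlib Require Import Reals Lra Lia List Sorting.Sorted.
Import ListNotations.
Open Scope R_scope.

(* The PL homeomorphism f_i of R realizing the generator x_i of F(p). *)
Definition gen_fun (p i : nat) (t : R) : R :=
  if Rle_dec t (INR i) then t
  else if Rle_dec t (INR i + 1) then INR p * t + INR i * (1 - INR p)
  else t + INR p - 1.

(* A positive word x_{i1}^{r1} ... x_{in}^{rn}, encoded as the list
   [(i1,r1); ...; (in,rn)].  Products compose on the right: the word acts
   by first applying f_{i1} r1 times, then f_{i2} r2 times, etc. *)
Fixpoint word_fun (p : nat) (w : list (nat * nat)) (t : R) : R :=
  match w with
  | [] => t
  | (i, r) :: w' => word_fun p w' (Nat.iter r (gen_fun p i) t)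
  end.

Definition positive_normal_form (w : list (nat * nat)) : Prop :=
  w <> [] /\
  Sorted (fun a b => (fst a < fst b)%nat) w /\
  Forall (fun a => (1 <= snd a)%nat) w.

Fixpoint sum_exps (w : list (nat * nat)) : nat :=
  match w with
  | [] => 0%nat
  | (_, r) :: w' => (r + sum_exps w')%nat
  end.

Fixpoint N2 (p : nat) (w : list (nat * nat)) : nat :=
  match w with
  | [] => 0%nat
  | (i, r) :: w' => Nat.max (i + (p - 1) * (r + sum_exps w') + 1) (N2 p w')
  end.

Definition D_word (w : list (nat * nat)) : nat :=
  (sum_exps w + fst (last w (0%nat, 0%nat)))%nat.

Definition breakpoint (g : R -> R) (t : R) : Prop :=
  ~ (exists eps a b, 0 < eps /\ forall s, Rabs (s - t) < eps -> g s = a * s + b).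

Definition last_breakpoint (g : R -> R) (t : R) : Prop :=
  breakpoint g t /\ forall s, breakpoint g s -> s <= t.

(* Main.v *)
Require Import Defs.
From Stdlib Require Import Reals List.
From Stdlib Require Import Lra Lia Arith Sorting.Sorted FunctionalExtensionality.
Import ListNotations.
Open Scope R_scope.

Definition Weak (g : R -> R) (t c : R) : Prop :=
  (forall s, t <= s -> g s = s + c) /\ (forall s, g s <= s + c).
Definition Strict (g : R -> R) (t c : R) : Prop :=
  exists d, 0 < d /\ forall s, t - d < s -> s < t -> g s < s + c.

Section F.
Variables (p i : nat).
Hypothesis Hp : (2 <= p)%nat.

Lemma P2 : 2 <= INR p.
Proof. replace 2 with (INR 2) by (simpl; ring). apply le_INR; exact Hp. Qed.

Lemma f_le s : gen_fun p i s <= s + (INR p - 1).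
Proof.
  pose proof P2. unfold gen_fun.
  destruct (Rle_dec s (INR i)); [lra|].
  destruct (Rle_dec s (INR i + 1)); [nra|lra].
Qed.

Lemma f_lt s : s < INR i + 1 -> gen_fun p i s < s + (INR p - 1).
Proof.
  intro H. pose proof P2. unfold gen_fun.
  destruct (Rle_dec s (INR i)); [lra|].
  destruct (Rle_dec s (INR i + 1)); [nra|lra].
Qed.

Lemma f_eq s : INR i + 1 <= s -> gen_fun p i s = s + (INR p - 1).
Proof.
  intro H. pose proof (pos_INR i). unfold gen_fun.
  destruct (Rle_dec s (INR i)); [lra|].
  destruct (Rle_dec s (INR i + 1)); [|lra].
  replace s with (INR i + 1) by lra. ring.
Qed.

Lemma comp G tG cG :
  Weak G tG cG -> (Strict G tG cG \/ tG - (INR p - 1) <= INR i + 1) ->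
  exists t, Weak (fun s => G (gen_fun p i s)) t (cG + (INR p - 1)) /\
            Strict (fun s => G (gen_fun p i s)) t (cG + (INR p - 1)) /\
            t + (cG + (INR p - 1)) = Rmax (INR i + INR p + cG) (tG + cG).
Proof.
  intros [HA HB] HC. pose proof P2.
  destruct (Rle_dec (tG - (INR p - 1)) (INR i + 1)) as [Hle|Hgt].
  - exists (INR i + 1). split; [split|split].
    + intros s Hs. rewrite f_eq by lra. rewrite HA by lra. ring.
    + intros s. pose proof (HB (gen_fun p i s)). pose proof (f_le s). lra.
    + exists 1. split; [lra|]. intros s _ Hs.
      pose proof (HB (gen_fun p i s)). pose proof (f_lt s Hs). lra.
    + unfold Rmax. destruct (Rle_dec _ _); lra.
  - destruct HC as [[d [Hd HS]]|HC]; [|lra].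
    exists (tG - (INR p - 1)). split; [split|split].
    + intros s Hs. rewrite f_eq by lra. rewrite HA by lra. ring.
    + intros s. pose proof (HB (gen_fun p i s)). pose proof (f_le s). lra.
    + exists (Rmin d (tG - (INR p - 1) - (INR i + 1))). split.
      { apply Rmin_pos; lra. }
      intros s H1 H2. pose proof (Rmin_r d (tG - (INR p - 1) - (INR i + 1))).
      pose proof (Rmin_l d (tG - (INR p - 1) - (INR i + 1))).
      rewrite f_eq by lra. pose proof (HS (s + (INR p - 1))). lra.
    + unfold Rmax. destruct (Rle_dec _ _); lra.
Qed.

Lemma iter_lem G tG cG :
  Weak G tG cG -> (Strict G tG cG \/ tG - (INR p - 1) <= INR i + 1) ->
  forall r, (1 <= r)%nat ->
  exists t, Weak (fun s => G (Nat.iter r (gen_fun p i) s)) t (cG + INR r * (INR p - 1)) /\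
            Strict (fun s => G (Nat.iter r (gen_fun p i) s)) t (cG + INR r * (INR p - 1)) /\
            t + (cG + INR r * (INR p - 1)) =
              Rmax (INR i + 1 + INR r * (INR p - 1) + cG) (tG + cG).
Proof.
  intros HW HC r Hr. pose proof P2.
  induction r as [|r IH]; [lia|].
  destruct (Nat.eq_dec r 0) as [->|Hr0].
  - destruct (comp G tG cG HW HC) as [t [A [B C]]].
    exists t. simpl Nat.iter. replace (INR 1) with 1 by (simpl; ring).
    replace (cG + 1 * (INR p - 1)) with (cG + (INR p - 1)) by ring.
    split; [exact A|split;[exact B|]]. rewrite C.
    replace (INR i + 1 + 1 * (INR p - 1) + cG) with (INR i + INR p + cG) by ring.
    reflexivity.
  - destruct IH as [tH [A [B C]]]; [lia|].
    destruct (comp _ tH _ A (or_introl B)) as [t [A' [B' C']]].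
    exists t.
    replace (fun s => G (Nat.iter (S r) (gen_fun p i) s))
      with (fun s => G (Nat.iter r (gen_fun p i) (gen_fun p i s))).
    2:{ apply functional_extensionality; intro s. rewrite Nat.iter_succ_r. reflexivity. }
    rewrite S_INR.
    replace (cG + (INR r + 1) * (INR p - 1)) with (cG + INR r * (INR p - 1) + (INR p - 1)) by ring.
    split; [exact A'|split;[exact B'|]]. rewrite C'.
    replace (tH + (cG + INR r * (INR p - 1))) with
      (tH + (cG + INR r * (INR p - 1))) in C by ring.
    rewrite C.
    replace (INR i + 1 + (INR r + 1) * (INR p - 1) + cG) with
      (INR i + INR p + (cG + INR r * (INR p - 1))) by ring.
    set (X := INR r * (INR p - 1)) in *.
    unfold Rmax; repeat destruct (Rle_dec _ _); lra.
Qed.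
End F.

Lemma INR_max a b : INR (Nat.max a b) = Rmax (INR a) (INR b).
Proof.
  unfold Rmax. destruct (Rle_dec (INR a) (INR b)) as [H|H].
  - apply INR_le in H. rewrite Nat.max_r by exact H. reflexivity.
  - assert (b <= a)%nat. { apply INR_le. lra. } rewrite Nat.max_l by assumption. reflexivity.
Qed.

Lemma main_claim p w : (2 <= p)%nat -> Forall (fun a => (1 <= snd a)%nat) w ->
  exists t, Weak (word_fun p w) t (INR (sum_exps w) * (INR p - 1)) /\
    (Strict (word_fun p w) t (INR (sum_exps w) * (INR p - 1)) \/ (w = [] /\ t = 0)) /\
    t + INR (sum_exps w) * (INR p - 1) = INR (N2 p w).
Proof.
  intros Hp HF. pose proof (P2 p Hp).
  induction w as [|[i r] w IH].
  - exists 0. simpl. split; [split|split]; [intros; lra|intros; lra|right; auto|lra].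
  - inversion HF as [|? ? Hr HF']; subst. simpl in Hr.
    destruct (IH HF') as [tG [A [B C]]].
    assert (HC : Strict (word_fun p w) tG (INR (sum_exps w) * (INR p - 1)) \/
                 tG - (INR p - 1) <= INR i + 1).
    { destruct B as [B|[_ B]]; [left; exact B|right; pose proof (pos_INR i); lra]. }
    destruct (iter_lem p i Hp _ _ _ A HC r Hr) as [t [A' [B' C']]].
    exists t. simpl word_fun. simpl sum_exps. simpl N2.
    rewrite plus_INR.
    replace ((INR r + INR (sum_exps w)) * (INR p - 1)) with
      (INR (sum_exps w) * (INR p - 1) + INR r * (INR p - 1)) by ring.
    split; [exact A'|split; [left; exact B'|]].
    rewrite C', INR_max, <- C.
    rewrite !plus_INR, mult_INR, minus_INR by lia. rewrite plus_INR.
    replace (INR 1) with 1 by reflexivity.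
    f_equal. ring.
Qed.

Lemma N2_ge_last p w : w <> [] -> (fst (last w (0%nat,0%nat)) + 1 <= N2 p w)%nat.
Proof.
  induction w as [|[i r] w IH]; intros H; [congruence|].
  destruct w as [|b w'].
  - simpl. eapply Nat.le_trans; [|apply Nat.le_max_l]. nia.
  - change (last ((i, r) :: b :: w') (0%nat, 0%nat)) with (last (b :: w') (0%nat, 0%nat)).
    specialize (IH ltac:(discriminate)).
    eapply Nat.le_trans; [exact IH|].
    change (N2 p ((i,r)::b::w')) with (Nat.max (i + (p-1)*(r + sum_exps (b::w')) + 1) (N2 p (b::w'))).
    apply Nat.le_max_r.
Qed.

Lemma N2_le p M w : Forall (fun a => (fst a <= M)%nat) w ->
  (N2 p w <= M + (p - 1) * sum_exps w + 1)%nat.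
Proof.
  induction w as [|[i r] w IH]; intros HF; simpl; [lia|].
  inversion HF; subst. simpl in *. specialize (IH H2).
  apply Nat.max_lub; [nia|]. eapply Nat.le_trans; [exact IH|]. nia.
Qed.

Lemma last_In_ {A} (w : list A) d : w <> [] -> In (last w d) w.
Proof.
  induction w as [|a w IH]; intros H; [congruence|].
  destruct w as [|b w']; [left; reflexivity|].
  right. apply IH. discriminate.
Qed.

Lemma sorted_last w : Sorted (fun a b => (fst a < fst b)%nat) w ->
  Forall (fun a => (fst a <= fst (last w (0%nat,0%nat)))%nat) w.
Proof.
  intros HS. apply Sorted_StronglySorted in HS.
  2:{ intros x y z; lia. }
  induction HS as [|a w HS IH Ha]; [constructor|].
  destruct w as [|b w'].
  - constructor; [simpl; lia|constructor].
  - change (last (a :: b :: w') (0%nat, 0%nat)) with (last (b :: w') (0%nat, 0%nat)).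
    constructor; [|exact IH].
    rewrite Forall_forall in Ha.
    specialize (Ha _ (last_In_ (b :: w') (0%nat,0%nat) ltac:(discriminate))). lia.
Qed.

Theorem proposition5 (p : nat) (w : list (nat * nat)) :
  (2 <= p)%nat -> positive_normal_form w ->
  (exists t, last_breakpoint (word_fun p w) t /\ word_fun p w t = INR (N2 p w)) /\
  INR (D_word w) / 2 <= INR (N2 p w) /\
  INR (N2 p w) <= INR (D_word w) * (INR p - 1) + 1.
Proof.
  intros Hp [Hne [HS HF]].
  pose proof (P2 p Hp).
  split.
  - destruct (main_claim p w Hp HF) as [t [[HA HB] [HC HY]]].
    destruct HC as [[d [Hd HS']]|[E _]]; [|congruence].
    set (c := INR (sum_exps w) * (INR p - 1)) in *.
    exists t. split; [split|].
    + intros [eps [a [b [He Hab]]]].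
      assert (E1 : word_fun p w t = a * t + b) by (apply Hab; rewrite Rminus_diag, Rabs_R0; lra).
      assert (E2 : word_fun p w (t + eps/2) = a * (t + eps/2) + b).
      { apply Hab. replace (t + eps/2 - t) with (eps/2) by ring. rewrite Rabs_pos_eq; lra. }
      rewrite HA in E1 by lra. rewrite HA in E2 by lra.
      assert (a = 1) by nra. subst a.
      assert (0 < Rmin eps d) by (apply Rmin_pos; lra).
      pose proof (Rmin_l eps d). pose proof (Rmin_r eps d).
      remember (Rmin eps d) as m.
      assert (E3 : word_fun p w (t - m/2) = 1 * (t - m/2) + b).
      { apply Hab. replace (t - m/2 - t) with (-(m/2)) by ring.
        rewrite Rabs_Ropp, Rabs_pos_eq; lra. }
      pose proof (HS' (t - m/2) ltac:(lra) ltac:(lra)). lra.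
    + intros s Hs. destruct (Rle_dec s t) as [|Hgt]; [assumption|exfalso].
      apply Hs. exists (s - t), 1, c. split; [lra|].
      intros s' Hs'. apply Rabs_def2 in Hs'. rewrite HA by lra. ring.
    + rewrite HA by lra. exact HY.
  - assert (H1 : (D_word w <= 2 * N2 p w)%nat).
    { unfold D_word. pose proof (N2_ge_last p w Hne).
      destruct w as [|[i r] w']; [congruence|].
      assert (sum_exps ((i, r) :: w') + 1 <= N2 p ((i, r) :: w'))%nat.
      { simpl. nia. }
      lia. }
    assert (H2 : (N2 p w <= D_word w * (p - 1) + 1)%nat).
    { unfold D_word. pose proof (N2_le p _ w (sorted_last w HS)). nia. }
    split.
    + apply le_INR in H1. rewrite mult_INR in H1. simpl (INR 2) in H1. lra.
    + apply le_INR in H2. rewrite plus_INR, mult_INR, minus_INR in H2 by lia.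
      simpl (INR 1) in H2. lra.
Qed.
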